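(* Let $T$ be a $\pi$-increasing tree with maximum vertex $v$. If $T$ is irreducible, then the $v$-dependence graph $G_v(T)$ is a tree rooted at $\pi^v$ with all edges directed towards the root (i.e., $\pi^v$ has outdegree $0$ and every other vertex has outdegree exactly $1$, and the underlying graph is a tree).
   Context: Standing assumptions: $r\ge2$ and $\pi$ is a set partition of $\{1,\dots,r\}$ having $\{1\}$ as a block; its blocks are $\pi_1,\dots,\pi_k$ with maxima $\mu_i=\max\pi_i$; $\pi^x$ denotes the block containing $x$. A set $\mathcal{S}$ is $\pi$-compatible if it is a union of blocks of $\pi$. An unordered increasing tree is a rooted tree on distinct positive integers, sons unordered, each son larger than its father. A $\pi$-increasing tree is an unordered increasing tree $T$ whose vertex-set is $\pi$-compatible and such that for any two elements $i<j$ of a same block of $\pi$ contained in $V(T)$, $i$ is an ancestor of $j$ in $T$. $v$-decomposition: for a vertex $v$ of $T$ with chain $a_1<\dots<a_\ell=v$ from the root to $v$, removing the chain edges leaves components $T^{(a_j)}$ rooted at $a_j$. $v$-dependence graph $G_v(T)$ of a $\pi$-increasing tree $T$: a directed graph whose vertices are the blocks of $\pi$ contained in $V(T)$; for each such block $\pi_i$ whose maximum $\mu_i$ is not on the chain $a_1,\dots,a_\ell$, $\mu_i$ is a non-root vertex of a unique $T^{(a_j)}$, and there is a directed edge (possibly a loop) from $\pi_i$ to $\pi^{a_j}$; there are no other edges. A $\pi$-increasing tree $T$ with maximum vertex $M$ is irreducible if $G_M(T)$ is connected (ignoring edge directions), and reducible otherwise. *)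

(* Defs.v *)
(* Vertices are elements of 'I_r.+1; the ground set {1,...,r}
   is [set i | 0 < i]. *)
From Stdlib Require Import Relations.Relation_Operators.
From mathcomp Require Import all_boot.

Set Implicit Arguments.
Unset Strict Implicit.
Unset Printing Implicit Defensive.

Section PiTrees.
Variable r : nat.
Local Notation T := 'I_r.+1.

Definition pi_partition (P : {set {set T}}) : bool :=
  partition P [set i : T | 0 < i] && ([set (inord 1 : T)] \in P).

Definition pi_compatible (P : {set {set T}}) (S : {set T}) : Prop :=
  S = \bigcup_(B in P | B \subset S) B.

Definition is_max_in (S : {set T}) (m : T) : Prop :=
  m \in S /\ forall y, y \in S -> y <= m.

(* An unordered increasing rooted tree with vertex set V and root rt, given
   by its father map par (only relevant on V \ {rt}): every non-root vertex
   has its father in V, and the father is smaller than the son. *)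
Definition incr_tree (V : {set T}) (rt : T) (par : T -> T) : Prop :=
  rt \in V /\ (forall x, x \in V -> x != rt -> par x \in V /\ par x < x).

Inductive ancestor (V : {set T}) (rt : T) (par : T -> T) : T -> T -> Prop :=
  | anc_refl x : ancestor V rt par x x
  | anc_step a x : x \in V -> x != rt -> ancestor V rt par a (par x) ->
                   ancestor V rt par a x.

Definition pi_inc_tree (P : {set {set T}}) (V : {set T}) (rt : T)
    (par : T -> T) : Prop :=
  [/\ incr_tree V rt par, pi_compatible P V &
      forall B, B \in P -> B \subset V ->
        forall i j, i \in B -> j \in B -> i < j -> ancestor V rt par i j].

Definition on_chain (V : {set T}) (rt : T) (par : T -> T) (v a : T) : Prop :=
  a \in V /\ ancestor V rt par a v.

(* in_comp a x : x is a vertex of the component T^(a) of the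
   v-decomposition (a on the chain): going up from x one reaches a
   without using any chain edge, i.e. without meeting the chain before a. *)
Inductive in_comp (V : {set T}) (rt : T) (par : T -> T) (v : T) : T -> T -> Prop :=
  | comp_here a : on_chain V rt par v a -> in_comp V rt par v a a
  | comp_up a x : x \in V -> x != rt -> ~ on_chain V rt par v x ->
                  in_comp V rt par v a (par x) -> in_comp V rt par v a x.

Definition dep_vertex (P : {set {set T}}) (V : {set T}) (B : {set T}) : bool :=
  (B \in P) && (B \subset V).

(* the edges of the v-dependence graph G_v(T): for each vertex B whose
   maximum m is not on the chain, exactly one edge B -> pi^{a_j}, where
   T^(a_j) is the component containing m. *)
Definition dep_edge (P : {set {set T}}) (V : {set T}) (rt : T) (par : T -> T) (v : T) (B C : {set T}) : Prop :=
  dep_vertex P V B /\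
  exists m a, [/\ is_max_in B m, ~ on_chain V rt par v m,
                  in_comp V rt par v a m & C = pblock P a].

Definition connected_on (Vb : {set T} -> bool)
    (E : {set T} -> {set T} -> Prop) : Prop :=
  forall B C, Vb B -> Vb C -> clos_refl_sym_trans _ E B C.

(* the underlying undirected multigraph (one edge per pair (B,C) with E B C)
   contains a cycle: distinct edges e_0..e_{k-1} (k >= 1) and distinct
   vertices x_0..x_{k-1} with e_i joining x_i and x_{i+1 mod k}.
   (k = 1: a loop; k = 2: two edges between the same pair.) *)
Definition has_cycle (E : {set T} -> {set T} -> Prop) : Prop :=
  exists (xs : seq {set T}) (es : seq ({set T} * {set T})),
    [/\ 0 < size es, size xs = size es, uniq xs, uniq es &
        forall i, i < size es ->
          let e := nth (set0, set0) es i in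
          E e.1 e.2 /\
          ((e.1 = nth set0 xs i /\ e.2 = nth set0 xs (i.+1 %% size es)) \/
           (e.2 = nth set0 xs i /\ e.1 = nth set0 xs (i.+1 %% size es)))].

Definition is_tree_graph (Vb : {set T} -> bool)
    (E : {set T} -> {set T} -> Prop) : Prop :=
  connected_on Vb E /\ ~ has_cycle E.

Definition irreducible (P : {set {set T}}) (V : {set T}) (rt : T) (par : T -> T) : Prop :=
  forall M, is_max_in V M -> connected_on (dep_vertex P V) (dep_edge P V rt par M).

End PiTrees.

(* Main.v *)
Require Import Defs.
From Stdlib Require Import Relations.Relation_Operators.
From Stdlib Require Import ClassicalEpsilon.
From mathcomp Require Import all_boot.

Set Implicit Arguments.
Unset Strict Implicit.

Fixpoint reachn (X : Type) (E : X -> X -> Prop) (x0 : X) (n : nat) (a : X) : Prop :=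
  match n with 0 => a = x0 | n'.+1 => exists b, E a b /\ reachn E x0 n' b end.

Lemma reachn_uniq (X : Type) (E : X -> X -> Prop) (x0 : X) :
  (forall a b c, E a b -> E a c -> b = c) -> (forall c, ~ E x0 c) ->
  forall n m a, reachn E x0 n a -> reachn E x0 m a -> n = m.
Proof.
move=> Hf Hs; elim=> [|n IH] [|m] a //=.
- by move=> -> [b [Hb _]]; case: (Hs b).
- by move=> [b [Hb _]] Ha; subst; case: (Hs b).
- move=> [b [Hb Rb]] [c [Hc Rc]]; have bc := Hf _ _ _ Hb Hc; subst c.
  by rewrite (IH m b).
Qed.

Lemma reach_edge (X : Type) (E : X -> X -> Prop) (x0 : X) :
  (forall a b c, E a b -> E a c -> b = c) -> (forall c, ~ E x0 c) ->
  forall a b, E a b -> ((exists n, reachn E x0 n a) <-> (exists n, reachn E x0 n b)).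
Proof.
move=> Hf Hs a b Hab; split.
- move=> [[|n] /=].
  + by move=> Ha; subst; case: (Hs b).
  + by move=> [c [Hc Rc]]; rewrite (Hf _ _ _ Hab Hc); exists n.
- by move=> [n Rn]; exists n.+1; exists b.
Qed.

Lemma reach_crst (X : Type) (E : X -> X -> Prop) (x0 : X) :
  (forall a b c, E a b -> E a c -> b = c) -> (forall c, ~ E x0 c) ->
  forall a b, clos_refl_sym_trans _ E a b ->
  ((exists n, reachn E x0 n a) <-> (exists n, reachn E x0 n b)).
Proof.
move=> Hf Hs a b; elim.
- by move=> x y; apply: reach_edge.
- by [].
- by move=> x y _ [H1 H2]; split.
- by move=> x y z _ [H1 H2] _ [H3 H4]; split => H; auto.
Qed.

Lemma max_idx (f : nat -> nat) k : 0 < k -> exists j, j < k /\ forall i, i < k -> f i <= f j.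
Proof.
elim: k => [//|k IH] _.
case: k IH => [|k] IH.
  by exists 0; split => // i; rewrite ltnS leqn0 => /eqP ->.
have [j [jk Hj]] := IH isT.
case: (leqP (f (k.+1)) (f j)) => H.
- exists j; split; first by apply: ltn_trans jk _.
  move=> i; rewrite ltnS leq_eqVlt => /orP [/eqP ->|]; first by [].
  exact: Hj.
- exists k.+1; split => // i; rewrite ltnS leq_eqVlt => /orP [/eqP ->|] //.
  move=> /Hj Hi; apply: leq_trans Hi _; exact: ltnW.
Qed.

Lemma no_cycle r (E : {set 'I_r.+1} -> {set 'I_r.+1} -> Prop) (x0 : {set 'I_r.+1}) :
  (forall a b c, E a b -> E a c -> b = c) -> (forall c, ~ E x0 c) ->
  (forall a b, E a b -> exists n, reachn E x0 n a) -> ~ has_cycle E.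
Proof.
move=> Hf Hs Hr.
pose d B := epsilon (inhabits 0) (fun n => reachn E x0 n B).
have dE : forall a b, E a b -> d a = (d b).+1.
  move=> a b Hab.
  have Ra := Hr _ _ Hab.
  have Rb : exists n, reachn E x0 n b by apply/(reach_edge Hf Hs Hab).
  have ra := epsilon_spec (inhabits 0) _ Ra.
  have rb := epsilon_spec (inhabits 0) _ Rb.
  apply: (reachn_uniq Hf Hs ra); by exists b.
move=> [xs [es [k0 sz ux ues H]]].
set k := size es in k0 sz H ues *.
have [j [jk Hj]] := max_idx (fun i => d (nth set0 xs i)) k0.
have j'k : j.+1 %% k < k by rewrite ltn_pmod.
have [Ej Hjc] := H j jk.
have {Hjc} [e1 e2] : (nth (set0, set0) es j).1 = nth set0 xs j /\
                     (nth (set0, set0) es j).2 = nth set0 xs (j.+1 %% k).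
  case: Hjc => // [[h2 h1]].
  have := dE _ _ Ej; rewrite h1 h2 => h.
  by have := Hj _ j'k; rewrite h ltnn.
pose p := (j + k.-1) %% k.
have pk : p < k by rewrite ltn_pmod.
have pj : p.+1 %% k = j.
  rewrite /p -addn1 modnDml -addnA addn1 prednK // modnDr modn_small //.
have [Ep Hpc] := H p pk.
have {Hpc} f1 : (nth (set0, set0) es p).1 = nth set0 xs j.
  case: Hpc => [[h1 h2]|[h2 h1]]; last by rewrite h1 pj.
  rewrite pj in h2.
  have := dE _ _ Ep; rewrite h1 h2 => h.
  by have := Hj _ pk; rewrite h ltnn.
have f2 : (nth (set0, set0) es p).2 = (nth (set0, set0) es j).2.
  apply: (Hf _ _ _ Ep); by rewrite f1 -e1.
have epj : nth (set0, set0) es p = nth (set0, set0) es j.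
  by rewrite [nth _ es p]surjective_pairing [nth _ es j]surjective_pairing f1 f2 e1.
have /eqP pjE : p == j by rewrite -(nth_uniq (set0, set0) pk jk ues) epj.
have {}e2 : (nth (set0, set0) es j).2 = nth set0 xs j by rewrite e2 -{1}pjE pj.
have := dE _ _ Ej; rewrite e1 e2 => h.
by move: (n_Sn (d (nth set0 xs j))); rewrite -h.
Qed.

Lemma in_comp_uniq r V rt par (v a a' x : 'I_r.+1) :
  in_comp V rt par v a x -> in_comp V rt par v a' x -> a = a'.
Proof.
move=> H; elim: H a' => [a0 ch | a0 x0 xV xr nch _ IH] a' H'.
- inversion H'; subst => //.
- inversion H'; subst.
  + by case: nch.
  + by apply: IH.
Qed.

Lemma max_uniq r (B : {set 'I_r.+1}) m m' : is_max_in B m -> is_max_in B m' -> m = m'.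
Proof.
move=> [mB mm] [mB' mm']; apply/val_inj/eqP; rewrite eqn_leq.
by rewrite (mm _ mB') (mm' _ mB).
Qed.

Lemma edge_fun r P V rt par (v : 'I_r.+1) B C C' :
  dep_edge P V rt par v B C -> dep_edge P V rt par v B C' -> C = C'.
Proof.
move=> [_ [m [a [Hm nm ca ->]]]] [_ [m' [a' [Hm' nm' ca' ->]]]].
have mm := max_uniq Hm Hm'; subst m'.
by rewrite (in_comp_uniq ca ca').
Qed.

Theorem lemma3p4 (r : nat) (P : {set {set 'I_r.+1}}) (V : {set 'I_r.+1})
    (rt : 'I_r.+1) (par : 'I_r.+1 -> 'I_r.+1) (v : 'I_r.+1) :
  2 <= r -> pi_partition P -> pi_inc_tree P V rt par -> is_max_in V v ->
  irreducible P V rt par ->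
  [/\ is_tree_graph (dep_vertex P V) (dep_edge P V rt par v),
      (forall C, ~ dep_edge P V rt par v (pblock P v) C) &
      (forall B, dep_vertex P V B -> B != pblock P v ->
         exists! C, dep_edge P V rt par v B C)].
Proof.
move=> _ Hpart [Htree Hcomp Hinc] [vV vmax] Hirr.
move/andP: Hpart => [/and3P [_ Htriv _] _].
have := vV; rewrite {1}Hcomp => /bigcupP [B0 /andP [B0P B0V] vB0].
have Pv : pblock P v = B0 by apply: def_pblock.
have Hs : forall C, ~ dep_edge P V rt par v B0 C.
  move=> C [_ [m [a [[mB mmax] nch _ _]]]]; apply: nch.
  have -> : m = v.
    apply/val_inj/eqP; rewrite eqn_leq (mmax _ vB0) andbT.
    by apply: vmax; apply: (subsetP B0V).
  by split => //; constructor.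
have Hf : forall a b c, dep_edge P V rt par v a b -> dep_edge P V rt par v a c -> b = c.
  by move=> a b c; apply: edge_fun.
have Hc := Hirr v (conj vV vmax).
have dB0 : dep_vertex P V B0 by rewrite /dep_vertex B0P B0V.
have Hreach : forall B, dep_vertex P V B ->
    exists n, reachn (dep_edge P V rt par v) B0 n B.
  move=> B dB; apply/(reach_crst Hf Hs (Hc _ _ dB dB0)); by exists 0.
split.
- split => //; apply: (no_cycle Hf Hs) => a b [da _]; exact: Hreach.
- by rewrite Pv.
- move=> B dB; rewrite Pv => neq.
  have [[|n] /= Rn] := Hreach B dB; first by rewrite Rn eqxx in neq.
  case: Rn => C [HC _]; exists C; split => // C' HC'; exact: Hf HC HC'.
Qed.
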